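(* If $L$ is an algebraic lattice, then $\dim_\nabla(L)=\mathrm{cov}(\mathrm{mi}_\Delta(L))$. In particular, for $n<\infty$, $\dim_\nabla(L)=n$ if and only if $n$ is the maximum size of an antichain of $\mathrm{mi}_\Delta(L)$.
   Context: $\mathrm{mi}_\Delta(L)$ is the set of completely meet-irreducible elements of $L$ (elements $m$ having an upper cover $m^*$ such that $z>m$ implies $z\geq m^*$). The complete join-dimension $\dim_\nabla(L)$ is the least cardinal $\kappa$ such that there is a one-to-one map from $L$ into a direct product of $\kappa$ complete chains preserving arbitrary joins. $\mathrm{cov}(P)$ is the least number of chains whose union is the poset $P$. *)

(* Defs.v *)
From Stdlib Require Import List.

Section Orders.
Variable T : Type.
Variable le : T -> T -> Prop.

Definition partial_order : Prop :=
  (forall x, le x x) /\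
  (forall x y, le x y -> le y x -> x = y) /\
  (forall x y z, le x y -> le y z -> le x z).

Definition upper_bound (S : T -> Prop) (x : T) : Prop := forall s, S s -> le s x.

Definition is_lub (S : T -> Prop) (x : T) : Prop :=
  upper_bound S x /\ forall y, upper_bound S y -> le x y.

Definition complete_lattice : Prop :=
  partial_order /\ forall S : T -> Prop, exists x, is_lub S x.

Definition compact (c : T) : Prop :=
  forall (S : T -> Prop) (s : T), is_lub S s -> le c s ->
    exists F : list T, (forall y, In y F -> S y) /\
      forall t, is_lub (fun y => In y F) t -> le c t.

Definition algebraic_lattice : Prop :=
  complete_lattice /\ forall x, is_lub (fun c => compact c /\ le c x) x.

Definition lt (x y : T) : Prop := le x y /\ x <> y.

Definition complete_chain : Prop :=
  complete_lattice /\ forall x y, le x y \/ le y x.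

(* mi_Delta(L): completely meet-irreducible elements *)
Definition mi_Delta (m : T) : Prop :=
  exists mstar, lt m mstar /\ forall z, lt m z -> le mstar z.

End Orders.

Arguments partial_order {T}.
Arguments upper_bound {T}.
Arguments is_lub {T}.
Arguments complete_lattice {T}.
Arguments compact {T}.
Arguments algebraic_lattice {T}.
Arguments lt {T}.
Arguments complete_chain {T}.
Arguments mi_Delta {T}.

Definition injective {A B : Type} (f : A -> B) : Prop :=
  forall x y, f x = f y -> x = y.

Definition card_le (J I : Type) : Prop := exists g : J -> I, injective g.

Definition prod_le {J : Type} {C : J -> Type} (leC : forall j, C j -> C j -> Prop)
  (u v : forall j, C j) : Prop := forall j, leC j (u j) (v j).

Definition join_embeds_in_chains {L : Type} (le : L -> L -> Prop) (J : Type) : Prop :=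
  exists (C : J -> Type) (leC : forall j, C j -> C j -> Prop),
    (forall j, complete_chain (leC j)) /\
    exists f : L -> forall j, C j,
      injective f /\
      forall (S : L -> Prop) (x : L), is_lub le S x ->
        is_lub (prod_le leC) (fun y => exists s, S s /\ y = f s) (f x).

Definition join_dim_le {L : Type} (le : L -> L -> Prop) (I : Type) : Prop :=
  exists J : Type, card_le J I /\ join_embeds_in_chains le J.

Definition mi_chain_cover {L : Type} (le : L -> L -> Prop) (J : Type) : Prop :=
  exists c : J -> L -> Prop,
    (forall j m, c j m -> mi_Delta le m) /\
    (forall j x y, c j x -> c j y -> le x y \/ le y x) /\
    (forall m, mi_Delta le m -> exists j, c j m).

Definition cov_mi_le {L : Type} (le : L -> L -> Prop) (I : Type) : Prop :=
  exists J : Type, card_le J I /\ mi_chain_cover le J.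

Definition fin (n : nat) : Type := {k : nat | k < n}.

Definition join_dim_eq_nat {L : Type} (le : L -> L -> Prop) (n : nat) : Prop :=
  join_dim_le le (fin n) /\ forall m, m < n -> ~ join_dim_le le (fin m).

Definition mi_antichain {L : Type} (le : L -> L -> Prop) (m : nat) (a : nat -> L) : Prop :=
  (forall k, k < m -> mi_Delta le (a k)) /\
  (forall k l, k < m -> l < m -> k <> l -> ~ le (a k) (a l)).

Definition max_antichain_mi {L : Type} (le : L -> L -> Prop) (n : nat) : Prop :=
  (exists a, mi_antichain le n a) /\
  (forall m a, mi_antichain le m a -> m <= n).

(* Main.v *)
Require Import Defs.
From mathcomp Require classical_sets.
Set Bullet Behavior "Strict Subproofs".
From Stdlib Require Import Classical ClassicalEpsilon FunctionalExtensionality PropExtensionality ProofIrrelevance List Lia Arith.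

Definition achain {T} (le : T -> T -> Prop) (P : T -> Prop) (m : nat) (a : nat -> T) : Prop :=
  (forall k, k < m -> P (a k)) /\
  (forall k l, k < m -> l < m -> k <> l -> ~ le (a k) (a l)).
Definition abnd {T} (le : T -> T -> Prop) (P : T -> Prop) (n : nat) : Prop :=
  forall m a, achain le P m a -> m <= n.
Definition colors {T} (le : T -> T -> Prop) (P : T -> Prop) (n : nat) (col : T -> nat) : Prop :=
  (forall x, P x -> col x < n) /\
  (forall x y, P x -> P y -> col x = col y -> le x y \/ le y x).
Definition fin_by {T} (P : T -> Prop) (N : nat) : Prop :=
  exists l : list T, length l <= N /\ forall x, P x -> In x l.

Definition tdec {T} : forall x y : T, {x = y} + {x <> y} :=
  fun x y => excluded_middle_informative (x = y).

Lemma pigeon : forall n m (f : nat -> nat), (forall k, k < m -> f k < n) ->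
  (forall k l, k < m -> l < m -> f k = f l -> k = l) -> m <= n.
Proof.
  induction n as [|n IH]; intros m f Hf Hi.
  - destruct m; [lia|]. specialize (Hf 0). lia.
  - destruct m as [|m]; [lia|].
    pose (g := fun k => if Nat.eq_dec (f k) n then f m else f k).
    assert (m <= n); [|lia].
    apply (IH m g).
    + intros k Hk. unfold g. destruct (Nat.eq_dec (f k) n) as [e|e].
      * assert (f m <> n). { intro e'. assert (k = m) by (apply Hi; lia). lia. }
        specialize (Hf m). lia.
      * specialize (Hf k). lia.
    + intros k l Hk Hl. unfold g.
      destruct (Nat.eq_dec (f k) n) as [e|e]; destruct (Nat.eq_dec (f l) n) as [e'|e'];
        intro E.
      * apply Hi; lia.
      * assert (l = m) by (apply Hi; lia). lia.
      * assert (k = m) by (apply Hi; lia). lia.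
      * apply Hi; lia.
Qed.

Lemma surj_fin : forall n (f : nat -> nat), (forall k, k < n -> f k < n) ->
  (forall k l, k < n -> l < n -> f k = f l -> k = l) ->
  forall i, i < n -> exists k, k < n /\ f k = i.
Proof.
  intros n f Hf Hi i Hin. apply NNPP; intro Hn.
  assert (Hne : forall k, k < n -> f k <> i). { intros k Hk E. apply Hn. eauto. }
  pose (g := fun k => if f k <? i then f k else f k - 1).
  assert (n <= n - 1); [|lia].
  apply (pigeon (n - 1) n g).
  - intros k Hk. unfold g. specialize (Hf k Hk). specialize (Hne k Hk).
    destruct (Nat.ltb_spec (f k) i); lia.
  - intros k l Hk Hl. unfold g. pose proof (Hne k Hk). pose proof (Hne l Hl).
    destruct (Nat.ltb_spec (f k) i); destruct (Nat.ltb_spec (f l) i); intro E;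
      apply Hi; auto; lia.
Qed.

Lemma maxnat : forall (Q : nat -> Prop) n, Q 0 -> (forall m, Q m -> m <= n) ->
  exists k, Q k /\ forall m, Q m -> m <= k.
Proof.
  intros Q n H0. induction n as [|n IH]; intros Hb.
  - exists 0. split; auto.
  - destruct (classic (Q (S n))) as [h|h].
    + exists (S n); auto.
    + apply IH. intros m Qm. specialize (Hb m Qm). destruct (Nat.eq_dec m (S n)); subst; tauto || lia.
Qed.

Lemma maximal_exists {T} (le : T -> T -> Prop) (Q : T -> Prop) : partial_order le ->
  forall N l, length l <= N -> forall x, Q x -> (forall z, Q z -> le x z -> In z l) ->
  exists a, Q a /\ le x a /\ forall z, Q z -> le a z -> z = a.
Proof.
  intros [Hr [Ha Ht]] N. induction N as [|N IH]; intros l Hl x Qx Hup.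
  - destruct l; [|simpl in Hl; lia]. destruct (Hup x Qx (Hr x)).
  - destruct (classic (exists z, Q z /\ le x z /\ z <> x)) as [[z [Qz [hxz hne]]]|h].
    + assert (Hxl : In x l) by (apply Hup; auto).
      pose proof (remove_length_lt tdec l x Hxl).
      destruct (IH (remove tdec x l)) with (x := z) as [a [Qa [hza Hma]]]; auto.
      * lia.
      * intros w Qw hzw. apply in_in_remove.
        -- intro E. subst w. apply hne. apply Ha; auto.
        -- apply Hup; auto. apply Ht with z; auto.
      * exists a. split; auto. split; auto. apply Ht with z; auto.
    + exists x. split; auto. split; auto. intros z Qz hxz. apply NNPP; intro hne.
      apply h. eauto.
Qed.

Lemma maximal_exists' {T} (le : T -> T -> Prop) (Q : T -> Prop) (l : list T) x :
  partial_order le -> Q x -> (forall z, Q z -> In z l) ->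
  exists a, Q a /\ forall z, Q z -> le a z -> z = a.
Proof.
  intros po Qx Hl. destruct (maximal_exists le Q po (length l) l (le_n _) x Qx) as [a [Qa [_ H]]].
  - intros z Qz _; auto.
  - eauto.
Qed.

Lemma achain_mono {T} (le : T -> T -> Prop) (P Q : T -> Prop) m a :
  (forall x, P x -> Q x) -> achain le P m a -> achain le Q m a.
Proof. intros H [h1 h2]. split; auto. Qed.

Lemma achain_trunc {T} (le : T -> T -> Prop) (P : T -> Prop) m n a :
  n <= m -> achain le P m a -> achain le P n a.
Proof. intros H [h1 h2]. split; intros; [apply h1|apply h2]; auto; lia. Qed.

Lemma achain_colors {T} (le : T -> T -> Prop) (P : T -> Prop) n col b :
  colors le P n col -> achain le P n b ->
  forall i, i < n -> exists k, k < n /\ col (b k) = i.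
Proof.
  intros [c1 c2] [h1 h2]. apply surj_fin.
  - intros k Hk. apply c1, h1, Hk.
  - intros k l Hk Hl E. apply NNPP; intro hne.
    destruct (c2 _ _ (h1 k Hk) (h1 l Hl) E) as [h|h].
    + apply (h2 k l); auto.
    + apply (h2 l k); auto.
Qed.

Theorem fin_dilworth {T} (le : T -> T -> Prop) : partial_order le ->
  forall N P n, fin_by P N -> abnd le P n -> exists col, colors le P n col.
Proof.
  intros po. pose proof po as [Hr [Ha Ht]].
  induction N as [|N IH]; intros P n [l [Hl HPl]] Hb.
  - exists (fun _ => 0). destruct l; [|simpl in Hl; lia].
    split; intros x; [intro h; destruct (HPl x h)|intros y h; destruct (HPl x h)].
  - destruct (classic (exists x, P x)) as [[x0 Px0]|Hne].
    2:{ exists (fun _ => 0). split; intros x; [intro h|intros y h]; exfalso; eauto. }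
    destruct (maximal_exists' le P l x0 po Px0 HPl) as [a [Pa Hamax]].
    assert (Hal : In a l) by auto.
    pose proof (remove_length_lt tdec l a Hal) as Hlen.
    pose (P' := fun x => P x /\ x <> a).
    assert (HfinP' : forall Q : T -> Prop, (forall x, Q x -> P' x) -> fin_by Q N).
    { intros Q HQ. exists (remove tdec a l). split; [lia|].
      intros x Qx. destruct (HQ x Qx) as [Px ne]. apply in_in_remove; auto. }
    destruct (maxnat (fun m => exists b, achain le P' m b) n) as [k [[b0 Hb0] Hkmax]].
    { exists (fun _ => a). split; intros; lia. }
    { intros m [b hb]. apply (Hb m b). apply achain_mono with P'; auto. intros x [h _]; auto. }
    assert (Hkn : k <= n).
    { apply (Hb k b0). apply achain_mono with P'; auto. intros x [h _]; auto. }
    destruct (IH P' k) as [col' Hcol']; [apply HfinP'; auto|intros m b hb; apply Hkmax; eauto|].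
    destruct (Nat.eq_dec k n) as [Ekn|Ekn].
    2:{ exists (fun x => if excluded_middle_informative (x = a) then k else col' x).
        destruct Hcol' as [c1 c2]. split.
        - intros x Px. destruct (excluded_middle_informative (x = a)) as [e|e]; [lia|].
          specialize (c1 x (conj Px e)). lia.
        - intros x y Px Py.
          destruct (excluded_middle_informative (x = a)) as [e|e];
          destruct (excluded_middle_informative (y = a)) as [e'|e']; intro E.
          + subst; auto.
          + specialize (c1 y (conj Py e')). lia.
          + specialize (c1 x (conj Px e)). lia.
          + apply c2; [split|split|]; auto. }
    subst k.
    pose (good := fun i z => P' z /\ col' z = i /\
                    exists b j, achain le P' n b /\ j < n /\ b j = z).
    assert (Hgood : forall i, i < n -> exists z, good i z).
    { intros i Hi. destruct (achain_colors le P' n col' b0 Hcol' Hb0 i Hi) as [j [Hj Ej]].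
      exists (b0 j). split; [apply (proj1 Hb0); auto|]. split; auto. exists b0, j; auto. }
    pose (maxgood := fun i z => good i z /\ forall w, good i w -> le z w -> w = z).
    assert (Hmg : forall i, i < n -> exists z, maxgood i z).
    { intros i Hi. destruct (Hgood i Hi) as [z gz].
      apply (maximal_exists' le (good i) l z po gz).
      intros w [[Pw _] _]; auto. }
    pose (x := fun i => epsilon (inhabits a) (maxgood i)).
    assert (Hx : forall i, i < n -> maxgood i (x i)).
    { intros i Hi. apply (epsilon_spec (inhabits a) (maxgood i)). auto. }
    assert (Hxg : forall i w, i < n -> good i w -> le w (x i)).
    { intros i w Hi gw. destruct (Hx i Hi) as [gx mx].
      pose proof gw as [Pw [cw _]]. pose proof gx as [Px [cx _]].
      destruct (proj2 Hcol' w (x i) Pw Px) as [h|h]; [congruence|auto|].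
      rewrite (mx w); auto. }
    assert (Hxa : forall i j, i < n -> j < n -> i <> j -> ~ le (x i) (x j)).
    { intros i j Hi Hj hij hle.
      destruct (Hx j Hj) as [[Pxj [cxj [b' [p' [Hb' [Hp' Ep']]]]]] _].
      destruct (achain_colors le P' n col' b' Hcol' Hb' i Hi) as [q' [Hq' Eq']].
      assert (gq : good i (b' q')).
      { split; [apply (proj1 Hb'); auto|]. split; auto. exists b', q'; auto. }
      assert (le (b' q') (b' p')).
      { rewrite Ep'. apply Ht with (x i); auto. }
      assert (q' <> p').
      { intro E. subst q'. rewrite Ep' in Eq'. congruence. }
      apply (proj2 Hb' q' p'); auto. }
    assert (HPx : forall i, i < n -> P' (x i)).
    { intros i Hi. destruct (Hx i Hi) as [[h _] _]; auto. }
    destruct (classic (exists i0, i0 < n /\ le (x i0) a)) as [[i0 [Hi0 Hxa0]]|Hno].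
    2:{ exfalso.
        assert (S n <= n); [|lia].
        apply (Hb (S n) (fun k => if k <? n then x k else a)). split.
        - intros k Hk. destruct (Nat.ltb_spec k n); auto. apply HPx; auto.
        - intros k j Hk Hj hkj.
          destruct (Nat.ltb_spec k n); destruct (Nat.ltb_spec j n).
          + apply Hxa; auto.
          + intro h. apply Hno. eauto.
          + intro h. assert (hj : j < n) by lia. destruct (HPx j hj) as [Pj nj]. apply nj. apply Hamax; auto.
          + lia. }
    pose (K := fun z => z = a \/ (P' z /\ col' z = i0 /\ le z (x i0))).
    pose (P'' := fun z => P z /\ ~ K z).
    destruct (IH P'' (n - 1)) as [col'' [d1 d2]].
    { apply HfinP'. intros z [Pz nK]. split; auto. intro E. apply nK. left; auto. }
    { intros m b hb. apply NNPP; intro hm.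
      assert (hb' : achain le P' n b).
      { apply achain_trunc with m; [lia|]. apply achain_mono with P''; auto.
        intros z [Pz nK]. split; auto. intro E. apply nK. left; auto. }
      destruct (achain_colors le P' n col' b Hcol' hb' i0 Hi0) as [q [Hq Eq]].
      assert (gq : good i0 (b q)).
      { split; [apply (proj1 hb'); auto|]. split; auto. exists b, q; auto. }
      destruct (proj1 hb q ltac:(lia)) as [_ nK]. apply nK. right.
      split; [apply (proj1 hb'); auto|]. split; auto. }
    exists (fun z => if excluded_middle_informative (K z) then n - 1 else col'' z).
    split.
    -- intros z Pz. destruct (excluded_middle_informative (K z)) as [e|e]; [lia|].
      specialize (d1 z (conj Pz e)). lia.
    -- intros z w Pz Pw.
      destruct (excluded_middle_informative (K z)) as [e|e];
      destruct (excluded_middle_informative (K w)) as [e'|e']; intro E.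
      ++ destruct e as [-> | [P'z [cz lz]]]; destruct e' as [-> | [P'w [cw lw]]].
        ** auto.
        ** right. apply Ht with (x i0); auto.
        ** left. apply Ht with (x i0); auto.
        ** apply (proj2 Hcol'); auto. congruence.
      ++ specialize (d1 w (conj Pw e')). lia.
      ++ specialize (d1 z (conj Pz e)). lia.
      ++ apply d2; [split|split|]; auto.
Qed.

Lemma lub_pair_le {T} (le : T -> T -> Prop) (a b : T) :
  partial_order le -> le a b -> is_lub le (fun s => s = a \/ s = b) b.
Proof.
  intros [Hr [Ha Ht]] Hab. split.
  - intros s [->| ->]; auto.
  - intros y Hy. apply Hy; auto.
Qed.

Lemma emb_mono {L J} (le : L -> L -> Prop) (C : J -> Type) (leC : forall j, C j -> C j -> Prop)
  (f : L -> forall j, C j) :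
  partial_order le ->
  (forall (S : L -> Prop) (x : L), is_lub le S x ->
        is_lub (prod_le leC) (fun y => exists s, S s /\ y = f s) (f x)) ->
  forall a b, le a b -> prod_le leC (f a) (f b).
Proof.
  intros po Hf a b Hab. destruct (Hf _ _ (lub_pair_le le a b po Hab)) as [Hu _].
  apply Hu. exists a; auto.
Qed.

Lemma embed_to_cover {L J} (le : L -> L -> Prop) :
  complete_lattice le -> join_embeds_in_chains le J -> mi_chain_cover le J.
Proof.
  intros [po Hc] [C [leC [Hch [f [Hinj Hf]]]]].
  pose proof (emb_mono le C leC f po Hf) as Hm.
  exists (fun j m => exists ms, lt le m ms /\ (forall z, lt le m z -> le ms z) /\ f m j <> f ms j).
  split; [|split].
  - intros j m [ms [H1 [H2 _]]]. exists ms; auto.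
  - intros j m m' [ms [[Hmms Hne] [Hms Hfj]]] [ms' [[Hmms' Hne'] [Hms' Hfj']]].
    destruct po as [Hr [Ha Ht]].
    apply NNPP; intro Hnc.
    destruct (Hc (fun s => s = m \/ s = m')) as [z [Hzu Hzl]].
    assert (Hmz : le m z) by (apply Hzu; auto).
    assert (Hm'z : le m' z) by (apply Hzu; auto).
    assert (Hsz : le ms z).
    { apply Hms. split; auto. intro E. subst z. apply Hnc. auto. }
    assert (Hs'z : le ms' z).
    { apply Hms'. split; auto. intro E. subst z. apply Hnc. auto. }
    destruct (Hch j) as [[[Hcr [Hca Hct]] _] Htot].
    pose (v := fun k => if excluded_middle_informative (leC k (f m k) (f m' k)) then f m' k else f m k).
    assert (Hv : prod_le leC (f z) v).
    { destruct (Hf _ _ (conj Hzu Hzl)) as [_ Hl]. apply Hl.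
      intros y [s [[-> | ->] ->]]; intro k; unfold v;
      destruct (excluded_middle_informative (leC k (f m k) (f m' k))) as [h|h].
      - exact h.
      - destruct (Hch k) as [[[Hr' _] _] _]. apply Hr'.
      - destruct (Hch k) as [[[Hr' _] _] _]. apply Hr'.
      - destruct (Hch k) as [_ Htk]. destruct (Htk (f m k) (f m' k)); tauto. }
    specialize (Hv j). unfold v in Hv.
    destruct (excluded_middle_informative (leC j (f m j) (f m' j))) as [h|h].
    + apply Hfj'. apply Hca.
      * apply (Hm _ _ Hmms').
      * apply Hct with (f z j); auto. apply (Hm _ _ Hs'z).
    + apply Hfj. apply Hca.
      * apply (Hm _ _ Hmms).
      * apply Hct with (f z j); auto. apply (Hm _ _ Hsz).
  - intros m [ms [[Hle Hne] Hms]].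
    apply NNPP; intro Hn.
    apply Hne. apply Hinj. apply functional_extensionality_dep. intro j.
    apply NNPP; intro Hj. apply Hn. exists j, ms. repeat split; auto.
Qed.



Lemma zorn_sets (T : Type) (P : (T -> Prop) -> Prop) :
  (forall F : (T -> Prop) -> Prop, (forall X, F X -> P X) ->
     (forall X Y, F X -> F Y -> (forall t, X t -> Y t) \/ (forall t, Y t -> X t)) ->
     P (fun t => exists X, F X /\ X t)) ->
  exists A, P A /\ forall B, (forall t, A t -> B t) -> P B -> forall t, B t -> A t.
Proof.
  intros H.
  destruct (@classical_sets.Zorn_bigcup T P) as [A [PA HA]].
  - intros F FP Ftot.
    assert (E : classical_sets.bigcup F (fun X => X) = (fun t => exists X, F X /\ X t)).
    { apply functional_extensionality; intro t; apply propositional_extensionality.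
      unfold classical_sets.bigcup, classical_sets.mkset; split.
      - intros [X FX Xt]; eauto.
      - intros [X [FX Xt]]; econstructor; eauto. }
    rewrite E. apply H; auto.
  - exists A; split; auto.
    intros B AB PB t Bt. apply NNPP; intro nA.
    apply (HA B); auto. split; [exact AB|]. intro BA. apply nA, BA, Bt.
Qed.

Lemma finite_chain_bound {L} (le : L -> L -> Prop) (A : L -> Prop) (y : L) :
  partial_order le -> (forall z, A z -> le y z) ->
  (forall z w, A z -> A w -> le z w \/ le w z) ->
  forall F : list L, (forall t, In t F -> t = y \/ A t) ->
  exists w, (w = y \/ A w) /\ forall t, In t F -> le t w.
Proof.
  intros [Hr [Ha Ht]] Hy Htot F. induction F as [|a F IH]; intros HF.
  - exists y. split; auto. intros t [].
  - destruct IH as [w [Hw Hwu]]. { intros t Ht'. apply HF. right; auto. }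
    destruct (HF a (or_introl eq_refl)) as [Ea|Aa].
    + subst a. exists w. split; auto. intros t [<-|Ht']; auto.
      destruct Hw as [->|Aw]; auto.
    + destruct Hw as [->|Aw].
      * exists a. split; auto. intros t [<-|Ht']; auto. apply Ht with y; auto.
      * destruct (Htot a w Aa Aw) as [h|h].
        -- exists w. split; auto. intros t [<-|Ht']; auto.
        -- exists a. split; auto. intros t [<-|Ht']; auto. apply Ht with w; auto.
Qed.

Lemma mi_separate {L} (le : L -> L -> Prop) :
  algebraic_lattice le -> forall x y, ~ le x y ->
  exists m, mi_Delta le m /\ le y m /\ ~ le x m.
Proof.
  intros [[po Hc] Halg] x y Hxy.
  pose proof po as [Hr [Ha Ht]].
  assert (Hcx : exists c, compact le c /\ le c x /\ ~ le c y).
  { apply NNPP; intro Hn. apply Hxy. destruct (Halg x) as [_ Hl]. apply Hl.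
    intros c [Hcc Hcx]. apply NNPP; intro Hcy. apply Hn. exists c; auto. }
  destruct Hcx as [c [Hcomp [Hcx Hcy]]].
  destruct (zorn_sets L (fun A => (forall z, A z -> le y z /\ ~ le c z) /\
                                   (forall z w, A z -> A w -> le z w \/ le w z)))
    as [A [[HA1 HA2] HAmax]].
  { intros F FP Ftot. split.
    - intros z [X [FX Xz]]. apply (FP X FX); auto.
    - intros z w [X [FX Xz]] [Y [FY Yw]].
      destruct (Ftot X Y FX FY) as [h|h].
      + apply (FP Y FY); auto.
      + apply (FP X FX); auto. }
  destruct (Hc (fun z => z = y \/ A z)) as [s [Hsu Hsl]].
  assert (Hys : le y s) by (apply Hsu; auto).
  assert (Hcs : ~ le c s).
  { intro H. destruct (Hcomp _ _ (conj Hsu Hsl) H) as [F [HF Hct]].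
    destruct (finite_chain_bound le A y po (fun z Az => proj1 (HA1 z Az)) HA2 F HF)
      as [w [Hw Hwu]].
    destruct (Hc (fun t => In t F)) as [t Hlt].
    specialize (Hct t Hlt). assert (le t w) by (apply (proj2 Hlt); exact Hwu).
    destruct Hw as [->|Aw]; [apply Hcy|apply (proj2 (HA1 w Aw))]; apply Ht with t; auto. }
  assert (Hmax : forall z, le s z -> ~ le c z -> z = s).
  { intros z Hsz Hcz.
    assert (Az : A z).
    { apply (HAmax (fun t => A t \/ t = z)); auto.
      split.
      - intros t [At| ->]; auto. split; auto. apply Ht with s; auto.
      - intros t w [At| ->] [Aw| ->]; auto.
        + left. apply Ht with s; auto.
        + right. apply Ht with s; auto. }
    apply Ha; auto. }
  exists s. split; [|split; auto].
  destruct (Hc (fun t => t = s \/ t = c)) as [ms [Hmu Hml]].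
  exists ms. split.
  - split. + apply Hmu; auto. + intro E. apply Hcs. rewrite E. apply Hmu; auto.
  - intros z [Hsz Hne]. apply Hml. intros t [-> | ->]; auto.
    apply NNPP; intro Hcz. apply Hne. symmetry. apply Hmax; auto.
  - intro H. apply Hcs. apply Ht with x; auto.
Qed.

Lemma cover_to_embed {L J} (le : L -> L -> Prop) :
  complete_lattice le ->
  (forall x y, ~ le x y -> exists m, mi_Delta le m /\ le y m /\ ~ le x m) ->
  mi_chain_cover le J -> join_embeds_in_chains le J.
Proof.
  intros [po Hc] Hsep [c [Hc1 [Hc2 Hc3]]].
  pose proof po as [Hr [Ha Ht]].
  pose (C := fun j => {U : L -> Prop | (forall m, U m -> c j m) /\
                               (forall m m', U m -> c j m' -> le m' m -> U m')}).
  pose (leC := fun j (U V : C j) => forall m, proj1_sig U m -> proj1_sig V m).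
  exists C, leC. split.
  { intro j. split; [split; [split; [|split]|]|].
    - intros U m h; exact h.
    - intros [U HU] [V HV] h1 h2. apply eq_sig_hprop.
      + intros; apply proof_irrelevance.
      + simpl. apply functional_extensionality; intro m; apply propositional_extensionality.
        split; [apply h1|apply h2].
    - intros U V W h1 h2 m h. apply h2, h1, h.
    - intros S.
      assert (HW : (forall m, (fun m => exists U : C j, S U /\ proj1_sig U m) m -> c j m) /\
                   (forall m m', (fun m => exists U : C j, S U /\ proj1_sig U m) m -> c j m' -> le m' m ->
                                 (fun m => exists U : C j, S U /\ proj1_sig U m) m')).
      { split.
        - intros m [U [_ HU]]. apply (proj1 (proj2_sig U)); auto.
        - intros m m' [U [SU HU]] cm' hle. exists U. split; auto.
          apply (proj2 (proj2_sig U)) with m; auto. }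
      exists (exist (fun U : L -> Prop => (forall m, U m -> c j m) /\ (forall m m', U m -> c j m' -> le m' m -> U m')) (fun m => exists U : C j, S U /\ proj1_sig U m) HW). split.
      + intros U SU m hm. simpl. exists U; auto.
      + intros Y HY m [U [SU HU]]. apply (HY U SU); auto.
    - intros [U [HU1 HU2]] [V [HV1 HV2]]. unfold leC; simpl.
      destruct (classic (forall m, U m -> V m)) as [h|h]; [left; exact h|right].
      apply not_all_ex_not in h. destruct h as [u hu].
      apply imply_to_and in hu. destruct hu as [Uu nVu].
      intros v Vv. destruct (Hc2 j u v (HU1 u Uu) (HV1 v Vv)) as [h|h].
      + exfalso. apply nVu. apply HV2 with v; auto.
      + apply HU2 with u; auto. }
  assert (Hfx : forall x j, (forall m, (fun m => c j m /\ ~ le x m) m -> c j m) /\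
             (forall m m', (fun m => c j m /\ ~ le x m) m -> c j m' -> le m' m ->
                           (fun m => c j m /\ ~ le x m) m')).
  { intros x j. split.
    - intros m [h _]; exact h.
    - intros m m' [cm nx] cm' hle. split; auto. intro h. apply nx. apply Ht with m'; auto. }
  exists (fun x j => exist (fun U : L -> Prop => (forall m, U m -> c j m) /\ (forall m m', U m -> c j m' -> le m' m -> U m')) (fun m => c j m /\ ~ le x m) (Hfx x j)). split.
  - intros x y E.
    assert (Hk : forall j m, (c j m /\ ~ le x m) <-> (c j m /\ ~ le y m)).
    { intros j m. assert (E' := f_equal (fun g => proj1_sig (g j)) E). simpl in E'.
      assert (E'' := f_equal (fun P => P m) E'). simpl in E''. rewrite E''. tauto. }
    apply Ha.
    + apply NNPP; intro h. destruct (Hsep _ _ h) as [m [mm [hy hx]]].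
      destruct (Hc3 m mm) as [j cj]. apply (proj2 (proj1 (Hk j m) (conj cj hx))). auto.
    + apply NNPP; intro h. destruct (Hsep _ _ h) as [m [mm [hy hx]]].
      destruct (Hc3 m mm) as [j cj]. apply (proj2 (proj2 (Hk j m) (conj cj hx))). auto.
  - intros S x [Hxu Hxl]. split.
    + intros Y [s [Ss ->]] j m [cm nx]. simpl. split; auto. intro h. apply nx.
      apply Ht with x; auto.
    + intros Y HY j m [cm nx]. simpl in *.
      destruct (classic (exists s, S s /\ ~ le s m)) as [[s [Ss ns]]|h].
      * apply (HY _ (ex_intro _ s (conj Ss eq_refl)) j). simpl. auto.
      * exfalso. apply nx. apply Hxl. intros s Ss. apply NNPP; intro ns. apply h. eauto.
Qed.



Lemma colors_mono {T} (le : T -> T -> Prop) (P Q : T -> Prop) n col :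
  (forall x, Q x -> P x) -> colors le P n col -> colors le Q n col.
Proof. intros H [c1 c2]. split; auto. Qed.

Definition agree {T} (A : T * nat -> Prop) (F : list T) (col : T -> nat) : Prop :=
  forall x i, In x F -> A (x, i) -> col x = i.

Definition ext {T} (le : T -> T -> Prop) (D : T -> Prop) (n : nat) (A : T * nat -> Prop) : Prop :=
  forall F, (forall x, In x F -> D x) ->
    exists col, colors le (fun x => In x F) n col /\ agree A F col.

Definition PZ {T} (le : T -> T -> Prop) (D : T -> Prop) (n : nat) (A : T * nat -> Prop) : Prop :=
  (forall x i j, A (x, i) -> A (x, j) -> i = j) /\ (forall x i, A (x, i) -> D x) /\ ext le D n A.

Lemma fin_col {T} (le : T -> T -> Prop) (D : T -> Prop) n : partial_order le -> abnd le D n ->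
  forall F, (forall x, In x F -> D x) -> exists col, colors le (fun x => In x F) n col.
Proof.
  intros po Hb F HF. apply (fin_dilworth le po (length F)).
  - exists F. split; auto.
  - intros m a ha. apply (Hb m a). apply achain_mono with (fun x => In x F); auto.
Qed.

Theorem inf_dilworth {T} (le : T -> T -> Prop) (D : T -> Prop) n :
  partial_order le -> abnd le D n ->
  exists c : fin n -> T -> Prop, (forall j x, c j x -> D x) /\
    (forall j x y, c j x -> c j y -> le x y \/ le y x) /\
    (forall x, D x -> exists j, c j x).
Proof.
  intros po Hb. pose proof po as [Hr [Ha Ht]].
  destruct (zorn_sets (T * nat) (PZ le D n)) as [A [[A1 [A2 A3]] Amax]].
  { intros Fam FP Ftot.
    pose (U := fun p => exists X, Fam X /\ X p).
    assert (U1 : forall x i j, U (x, i) -> U (x, j) -> i = j).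
    { intros x i j [X [FX Xi]] [Y [FY Yj]].
      destruct (Ftot X Y FX FY) as [h|h].
      - apply (proj1 (FP Y FY) x); auto.
      - apply (proj1 (FP X FX) x); auto. }
    split; [exact U1|split].
    - intros x i [X [FX Xi]]. apply (proj1 (proj2 (FP X FX)) x i Xi).
    - intros F HF. destruct (classic (exists M0, Fam M0)) as [[M0 FM0]|hno].
      + assert (HM : exists M, Fam M /\ forall x i, In x F -> U (x, i) -> M (x, i)).
        { clear HF. induction F as [|y F IHF].
          - exists M0. split; auto. intros x i [].
          - destruct IHF as [M [FM HM]].
            destruct (classic (exists i, U (y, i))) as [[i0 [M' [FM' M'i]]]|hn].
            + destruct (Ftot M M' FM FM') as [h|h].
              * exists M'. split; auto. intros x i [<-|hx] Ui.
                -- assert (i = i0) by (apply (U1 y); auto; exists M'; auto). subst; auto.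
                -- apply h; auto.
              * exists M. split; auto. intros x i [<-|hx] Ui.
                -- assert (i = i0) by (apply (U1 y); auto; exists M'; auto). subst; auto.
                -- auto.
            + exists M. split; auto. intros x i [<-|hx] Ui; [exfalso; eauto|auto]. }
        destruct HM as [M [FM HM]].
        destruct (proj2 (proj2 (FP M FM)) F HF) as [col [hc ha]].
        exists col. split; auto. intros x i hx Ui. apply ha; auto.
      + destruct (fin_col le D n po Hb F HF) as [col hc]. exists col. split; auto.
        intros x i _ [X [FX _]]. exfalso; eauto. }
  assert (Htot : forall x, D x -> exists i, A (x, i)).
  { intros x Dx. apply NNPP; intro hn.
    assert (Hstep : forall k, k <= n -> exists G, (forall y, In y G -> D y) /\
        forall i col, i < k -> colors le (fun y => In y (x :: G)) n col ->
                      agree A (x :: G) col -> col x <> i).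
    { induction k as [|k IHk]; intros hk.
      - exists nil. split; [intros y []|]. intros; lia.
      - destruct IHk as [G [HG HGc]]; [lia|].
        assert (Hnext : ~ ext le D n (fun p => A p \/ p = (x, k))).
        { intro He. apply hn. exists k.
          apply (Amax (fun p => A p \/ p = (x, k))); auto.
          split; [|split; auto].
          - intros z i j [h|h] [h'|h'].
            + apply (A1 z); auto.
            + injection h'; intros; subst. exfalso. apply hn. eauto.
            + injection h; intros; subst. exfalso. apply hn. eauto.
            + injection h; injection h'; intros; subst; auto.
          - intros z i [h|h]; [apply (A2 z i h)|injection h; intros; subst; auto]. }
        unfold ext in Hnext.
        apply not_all_ex_not in Hnext. destruct Hnext as [Fk hFk].
        apply imply_to_and in hFk. destruct hFk as [HFk hFk].
        exists (Fk ++ G). split.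
        + intros y hy. apply in_app_or in hy. destruct hy; auto.
        + intros i col hi hc ha.
          destruct (Nat.eq_dec i k) as [->|hik].
          * intro E. apply hFk. exists col. split.
            -- apply colors_mono with (fun y => In y (x :: Fk ++ G)); auto.
               intros y hy. right. apply in_or_app. auto.
            -- intros y j hy [hA|hE].
               ++ apply ha; auto. right. apply in_or_app. auto.
               ++ injection hE; intros; subst; auto.
          * apply HGc; [lia| |].
            -- apply colors_mono with (fun y => In y (x :: Fk ++ G)); auto.
               intros y [hy|hy]; [left; auto|right; apply in_or_app; auto].
            -- intros y j [hy|hy] hA; apply ha; auto; [left; auto|right; apply in_or_app; auto]. }
    destruct (Hstep n (le_n n)) as [G [HG HGc]].
    destruct (A3 (x :: G)) as [col [hc ha]].
    { intros y [<-|hy]; auto. }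
    apply (HGc (col x) col); auto. apply (proj1 hc). left; auto. }
  exists (fun j y => D y /\ A (y, proj1_sig j)). split; [|split].
  - intros j y [h _]; auto.
  - intros [j hj] y z [Dy Ay] [Dz Az]. simpl in *.
    destruct (A3 (y :: z :: nil)) as [col [hc ha]].
    { intros w [<-|[<-|[]]]; auto. }
    apply (proj2 hc); simpl; auto.
    rewrite (ha y j), (ha z j); simpl; auto.
  - intros y Dy. destruct (Htot y Dy) as [i Ai].
    destruct (A3 (y :: nil)) as [col [hc ha]].
    { intros w [<-|[]]; auto. }
    assert (hi : i < n). { rewrite <- (ha y i); simpl; auto. apply (proj1 hc). simpl; auto. }
    exists (exist _ i hi). simpl. auto.
Qed.

Lemma cover_bound {L J} (le : L -> L -> Prop) n :
  mi_chain_cover le J -> card_le J (fin n) -> forall m a, mi_antichain le m a -> m <= n.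
Proof.
  intros [c [c1 [c2 c3]]] [g Hg] m a [h1 h2].
  destruct m as [|m']; [lia|].
  destruct (c3 (a 0) (h1 0 ltac:(lia))) as [j0 _].
  pose (jj := fun k => epsilon (inhabits j0) (fun j => c j (a k))).
  assert (Hjj : forall k, k < S m' -> c (jj k) (a k)).
  { intros k hk. apply (epsilon_spec (inhabits j0) (fun j => c j (a k))). apply c3, h1, hk. }
  apply (pigeon n (S m') (fun k => proj1_sig (g (jj k)))).
  - intros k _. apply (proj2_sig (g (jj k))).
  - intros k l hk hl E.
    assert (E' : g (jj k) = g (jj l)).
    { apply eq_sig_hprop; [intros; apply proof_irrelevance|exact E]. }
    apply Hg in E'.
    apply NNPP; intro hne.
    pose proof (Hjj k hk) as ck. pose proof (Hjj l hl) as cl. rewrite E' in ck.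
    destruct (c2 _ _ _ ck cl) as [h|h]; [apply (h2 k l)|apply (h2 l k)]; auto.
Qed.

Lemma cov_from_abnd {L} (le : L -> L -> Prop) n :
  partial_order le -> (forall m a, mi_antichain le m a -> m <= n) -> cov_mi_le le (fin n).
Proof.
  intros po H. destruct (inf_dilworth le (mi_Delta le) n po H) as [c hc].
  exists (fin n). split.
  - exists (fun x => x). intros x y E; exact E.
  - exists c. exact hc.
Qed.

Theorem corollary7p5 (L : Type) (le : L -> L -> Prop) :
  algebraic_lattice le ->
  (forall I : Type, join_dim_le le I <-> cov_mi_le le I) /\
  (forall n : nat, join_dim_eq_nat le n <-> max_antichain_mi le n).
Proof.
  intros Halg.
  pose proof Halg as [[po Hc] _].
  assert (P1 : forall I : Type, join_dim_le le I <-> cov_mi_le le I).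
  { intros I. split.
    - intros [J [HJ He]]. exists J. split; auto. apply embed_to_cover; auto. split; auto.
    - intros [J [HJ He]]. exists J. split; auto. apply cover_to_embed; auto.
      + split; auto.
      + apply mi_separate; auto. }
  split; [exact P1|].
  intros n. split.
  - intros [Hle Hlt].
    pose proof (proj1 (P1 _) Hle) as [J [HJ Hcov]].
    split.
    + apply NNPP; intro Hn.
      destruct n as [|n'].
      * destruct (Hc (fun _ => False)) as [z _]. apply Hn. exists (fun _ => z).
        split; intros; lia.
      * apply (Hlt n' (le_n _)). apply (proj2 (P1 _)). apply cov_from_abnd; auto.
        intros m a ha. apply NNPP; intro hm. apply Hn. exists a.
        destruct ha as [h1 h2]. split; intros; [apply h1|apply h2]; auto; lia.
    + intros m a ha. apply (cover_bound le n Hcov HJ m a ha).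
  - intros [[a Ha] Hmax]. split.
    + apply (proj2 (P1 _)). apply cov_from_abnd; auto.
    + intros m hm Hd. pose proof (proj1 (P1 _) Hd) as [J [HJ Hcov]].
      pose proof (cover_bound le m Hcov HJ n a Ha). lia.
Qed.
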